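(* Fix integers $k\ge 2$ and $1 \le t \le k/2$. Let $X$ be a set of $n$ elements with a fixed but unknown total order, and consider a $(k,t)$ scale, which on input any $k$-element subset of $X$ returns the $t$-th smallest element of that subset. Let $S$ be the set of the $t-1$ smallest elements of $X$ and $L$ the set of the $k-t$ largest elements of $X$. Then any off-line (non-adaptive) family of queries from whose results one can determine, for every possible ordering of $X$, the relative order of the elements of $X \setminus (S\cup L)$ must contain at least $$\frac{\binom{n}{k-(t-1)}}{\binom{k}{k-(t-1)}}$$ queries; in particular $\Omega(n^{k-t+1})$ queries are needed for fixed $k,t$.
   Context: A query is a $k$-element subset of $X$; the scale returns its $t$-th smallest element. In the off-line setting the whole family of queries must be specified in advance, and all results are then revealed simultaneously. *)

(* Defs.v *)
From mathcomp Require Import all_boot all_order all_algebra all_fingroup.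
Set Implicit Arguments. Unset Strict Implicit. Unset Printing Implicit Defensive.

(* The ground set X is 'I_n.  A (hidden) total order on X is encoded by a
   permutation sigma : {perm 'I_n}, where sigma x is the rank of x
   (0 = smallest): x is smaller than y iff sigma x < sigma y. *)

(* Answer of the (k,t) scale on query Q under ordering sigma: the t-th
   smallest element of Q, i.e. the x in Q having exactly t-1 elements of Q
   below it (None only if no such element, which cannot happen when #|Q| >= t). *)
Definition scale_answer (n t : nat) (sigma : {perm 'I_n}) (Q : {set 'I_n})
  : option 'I_n :=
  [pick x in Q | #|[set y in Q | sigma y < sigma x]| == t.-1].

(* X \ (S u L): elements of rank r with t-1 <= r < n-(k-t), where
   S = the t-1 smallest and L = the k-t largest elements. *)
Definition middle (n k t : nat) (sigma : {perm 'I_n}) : {set 'I_n} :=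
  [set x | (t.-1 <= sigma x) && (sigma x < n - (k - t))].

Definition determines_middle (n k t : nat) (F : {set {set 'I_n}}) : Prop :=
  forall sigma tau : {perm 'I_n},
    (forall Q, Q \in F -> scale_answer t sigma Q = scale_answer t tau Q) ->
    middle k t sigma = middle k t tau /\
    (forall x y, x \in middle k t sigma -> y \in middle k t sigma ->
       (sigma x < sigma y) = (tau x < tau y)).

(* Main.v *)
Require Import Defs.
From mathcomp Require Import all_boot all_order all_algebra all_fingroup.
From mathcomp Require Import zify.

Lemma union_bound (I T : finType) (P : {pred I}) (G : I -> {set T}) :
  (#|\bigcup_(i in P) G i| <= \sum_(i in P) #|G i|)%N.
Proof.
elim/big_rec2: _ => [|i c U _ leUn]; first by rewrite cards0.
by rewrite (leq_trans (leq_card_setU _ U).1) ?leq_add2l.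
Qed.

Lemma count_cover n k m (F : {set {set 'I_n}}) :
  (forall Q, Q \in F -> #|Q| = k) ->
  (forall A : {set 'I_n}, #|A| = m -> exists2 Q, Q \in F & A \subset Q) ->
  ('C(n, m) <= #|F| * 'C(k, m))%N.
Proof.
move=> HF Hc.
have sub : [set A : {set 'I_n} | #|A| == m] \subset
    \bigcup_(Q in F) [set A : {set 'I_n} | A \subset Q & #|A| == m].
  apply/subsetP => A; rewrite inE => /eqP hA.
  have [Q QF AQ] := Hc A hA.
  by apply/bigcupP; exists Q => //; rewrite inE AQ hA eqxx.
have := subset_leq_card sub; rewrite card_draws card_ord => h.
apply: (leq_trans h). apply: leq_trans (union_bound _ _ _ _) _.
rewrite (eq_bigr (fun _ => 'C(k, m))); first by rewrite sum_nat_const.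
by move=> Q QF; rewrite cards_draws HF.
Qed.

Lemma exists_perm_top n (A : {set 'I_n}) :
  exists sigma : {perm 'I_n}, forall x, (x \in A) = (n - #|A| <= sigma x)%N.
Proof.
case: n A => [|n'] A.
  by exists 1%g => -[].
pose s := enum (~: A) ++ enum A.
have hsz : size s = n'.+1.
  by rewrite size_cat -!cardE addnC cardsC card_ord.
have hin : forall x, x \in s by move=> x; rewrite mem_cat !mem_enum inE orNb.
pose f (x : 'I_n'.+1) : 'I_n'.+1 := inord (index x s).
have hidx : forall x, (index x s < n'.+1)%N by move=> x; rewrite -[X in (_ < X)%N]hsz index_mem.
have finj : injective f.
  move=> x y /(congr1 (@nat_of_ord _)); rewrite /f !inordK // => e.
  by rewrite -(nth_index x (hin x)) e nth_index.
exists (perm finj) => x; rewrite permE /f inordK //.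
rewrite /s index_cat mem_enum inE.
have hc : #|~: A| = (n'.+1 - #|A|)%N by have := cardsC A; rewrite card_ord; lia.
case xA: (x \in A) => /=.
  by rewrite -cardE hc leq_addr.
have : (index x (enum (~: A)) < size (enum (~: A)))%N by rewrite index_mem mem_enum inE xA.
by rewrite -cardE hc => h; apply/esym/negbTE; rewrite -ltnNge.
Qed.

Lemma cover_all n k t (hk : (2 <= k)%N) (ht1 : (1 <= t)%N)
  (ht2 : (t.*2 <= k)%N) (hkn : (k <= n)%N) (F : {set {set 'I_n}}) :
  (forall Q, Q \in F -> #|Q| = k) ->
  determines_middle k t F ->
  forall A : {set 'I_n}, #|A| = (k - t.-1)%N -> exists2 Q, Q \in F & A \subset Q.
Proof.
move=> HF Hdet A hA.
case: (boolP [exists Q in F, A \subset Q]) => [/existsP [Q /andP[QF AQ]]|];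
  first by exists Q.
rewrite negb_exists => /forallP hno.
have [sigma hs] := exists_perm_top _ A.
rewrite hA in hs.
set p := (n - (k - t.-1))%N in hs.
have hp0 : (p < n)%N by rewrite /p; lia.
have hp1 : (p.+1 < n)%N by rewrite /p; lia.
pose a := (sigma^-1)%g (Ordinal hp0).
pose b := (sigma^-1)%g (Ordinal hp1).
have sa : sigma a = p :> nat by rewrite /a permKV.
have sb : sigma b = p.+1 :> nat by rewrite /b permKV.
have aA : a \in A by rewrite hs sa.
have bA : b \in A by rewrite hs sb.
have hsi : forall z, z != a -> z != b -> (sigma z != p :> nat) && (sigma z != p.+1 :> nat).
  move=> z za zb; apply/andP; split.
    by apply: contra za => /eqP e; apply/eqP; apply: (perm_inj (s:=sigma)); apply/val_inj; rewrite /= e sa.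
  by apply: contra zb => /eqP e; apply/eqP; apply: (perm_inj (s:=sigma)); apply/val_inj; rewrite /= e sb.
have ab : a != b by apply/eqP => e; move: sa; rewrite e sb; lia.
pose tau := (tperm a b * sigma)%g.
have htau : forall z, tau z = sigma (tperm a b z) by move=> z; rewrite permM.
have hcmp : forall x y, ~~ [&& x \in [set a; b], y \in [set a; b] & x != y] ->
    (tau y < tau x)%N = (sigma y < sigma x)%N.
{ move=> x y; rewrite !htau !inE.
  case: (tpermP a b x) => [->|->|xa xb]; case: (tpermP a b y) => [->|->|ya yb];
    rewrite ?eqxx ?sa ?sb //=.
  all: try (by move=> /negP []; rewrite ?(eq_sym b a) ?ab ?orbT).
  all: move=> _.
  all: try (have /andP[/eqP ? /eqP ?] := hsi x (introN eqP xa) (introN eqP xb));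
       try (have /andP[/eqP ? /eqP ?] := hsi y (introN eqP ya) (introN eqP yb)).
  all: apply/idP/idP; lia. }
have htA : forall z, (z \in A) = (p <= tau z)%N.
  move=> z; rewrite htau -hs.
  by case: (tpermP a b z) => [->|->|//]; rewrite ?aA ?bA.
have hge : forall (rho : {perm 'I_n}) (Q : {set 'I_n}) x, Q \in F ->
    (forall z, (z \in A) = (p <= rho z)%N) -> x \in A ->
    (t <= #|[set y in Q | rho y < rho x]|)%N.
  move=> rho Q x QF hr xA.
  have hQA : (t <= #|Q :\: A|)%N.
    have hp : Q :&: A \proper A.
      rewrite properE subsetIr /=; apply/negP => hsub.
      by move: (hno Q); rewrite QF (subset_trans hsub (subsetIl _ _)).
    have := proper_card hp; have := cardsID A Q; rewrite (HF Q QF) hA; lia.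
  apply: (leq_trans hQA); apply: subset_leq_card; apply/subsetP => y.
  rewrite !inE => /andP[yA yQ]; rewrite yQ /=.
  move: yA xA; rewrite !hr; lia.
have hans : forall Q, Q \in F -> scale_answer t sigma Q = scale_answer t tau Q.
  move=> Q QF; rewrite /scale_answer; apply: eq_pick => x /=.
  case xQ: (x \in Q) => //=.
  case: (boolP [exists y in Q, [&& x \in [set a; b], y \in [set a; b] & x != y]]).
    move=> /existsP [y /andP [yQ /and3P [xab _ _]]].
    have xA : x \in A by move: xab; rewrite !inE => /orP [] /eqP ->.
    have h1 := hge sigma Q x QF hs xA.
    have h2 := hge tau Q x QF htA xA.
    have -> : (#|[set y0 in Q | sigma y0 < sigma x]| == t.-1) = false by apply/eqP; lia.
    have -> : (#|[set y0 in Q | tau y0 < tau x]| == t.-1) = false by apply/eqP; lia.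
    by [].
  rewrite negb_exists => /forallP hy.
  suff -> : [set y0 in Q | tau y0 < tau x] = [set y0 in Q | sigma y0 < sigma x] by [].
  apply/setP => y; rewrite !inE.
  case yQ: (y \in Q) => //=.
  by rewrite hcmp //; move: (hy y); rewrite yQ.
have [hmid _] := Hdet sigma tau hans.
have : a \in middle k t sigma by rewrite /middle inE sa; apply/andP; split; rewrite /p; lia.
rewrite hmid /middle inE htau tpermL sb /p; lia.
Qed.

Local Open Scope ring_scope.

Theorem mainTheorem3 (n k t : nat) (hk : (2 <= k)%N) (ht1 : (1 <= t)%N)
  (ht2 : (t.*2 <= k)%N) (hkn : (k <= n)%N) (F : {set {set 'I_n}}) :
  (forall Q, Q \in F -> #|Q| = k) ->
  determines_middle k t F ->
  ('C(n, k - t.-1)%:R / 'C(k, k - t.-1)%:R : rat) <= (#|F|)%:R.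
Proof.
move=> HF Hdet.
have h := count_cover _ _ _ _ HF (cover_all _ _ _ hk ht1 ht2 hkn _ HF Hdet).
have hpos : (0 < 'C(k, k - t.-1))%N by rewrite bin_gt0 leq_subr.
rewrite Num.Theory.ler_pdivrMr ?Num.Theory.ltr0n // -GRing.natrM Num.Theory.ler_nat.
exact: h.
Qed.
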